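(* If $\mathcal{R}_0<1$, then the disease-free equilibrium $E_0=\left(\frac{\Lambda}{\lambda},\frac{r\Lambda}{\mu\lambda},0,0\right)$ of the model is globally asymptotically stable.
   Context: The model is $\dot S=\Lambda-F_1(S,I_1)-F_2(S,I_2)-\lambda S$, $\dot V_1=rS-(\mu+kI_2)V_1$, $\dot I_1=F_1(S,I_1)-\alpha_1I_1$, $\dot I_2=F_2(S,I_2)+kI_2V_1-\alpha_2I_2$ on $\mathbb{R}^4_+$. The constants $\Lambda,\mu,r,k,\gamma_1,\gamma_2>0$ and $v_1,v_2\ge0$; $\lambda=r+\mu$ and $\alpha_i=\gamma_i+v_i+\mu$. For $i=1,2$ the incidence functions satisfy: - (H1) $F_i(S,I_i)=I_if_i(S,I_i)$ with $F_i,f_i\in C^2(\mathbb{R}^2_+,\mathbb{R}_+)$ and $F_i(0,I_i)=F_i(S,0)=0$; - (H2) $\partial f_i/\partial S>0$ and $\partial f_i/\partial I_i\le0$; - (H3) $\lim_{I_i\to0^+}F_i(S,I_i)/I_i$ exists and is positive for $S>0$. Let $S^0=\Lambda/\lambda$ and $\sigma_i=\frac{\partial F_i}{\partial I_i}(S^0,0)$. Set $\mathcal{R}_1=\sigma_1/\alpha_1$, $\mathcal{R}_2=\sigma_2/\alpha_2+\frac{kr\Lambda}{\alpha_2\mu\lambda}$ and $\mathcal{R}_0=\max\{\mathcal{R}_1,\mathcal{R}_2\}$. *)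

(* Defs.v *)
From Stdlib Require Import Reals.
From Coquelicot Require Import Coquelicot.
Open Scope R_scope.

Definition quadrant (p : R * R) : Prop := 0 <= fst p /\ 0 <= snd p.

(** Partial derivatives of G : R^2_+ -> R at a point (x,y) of the closed
    quadrant, taken within the quadrant (one-sided on the boundary). *)
Definition is_dS (G : R -> R -> R) (x y d : R) : Prop :=
  filterlim (fun h => (G (x + h) y - G x y) / h)
    (within (fun h => h <> 0 /\ 0 <= x + h) (locally 0)) (locally d).

Definition is_dI (G : R -> R -> R) (x y d : R) : Prop :=
  filterlim (fun h => (G x (y + h) - G x y) / h)
    (within (fun h => h <> 0 /\ 0 <= y + h) (locally 0)) (locally d).

Definition cont_quadrant (G : R -> R -> R) : Prop :=
  forall x y, 0 <= x -> 0 <= y ->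
    filterlim (fun p : R * R => G (fst p) (snd p))
      (within quadrant (locally (x, y))) (locally (G x y)).

Definition C2_quadrant (G : R -> R -> R) : Prop :=
  exists d1 d2 d11 d12 d21 d22 : R -> R -> R,
    (forall x y, 0 <= x -> 0 <= y ->
       is_dS G x y (d1 x y) /\ is_dI G x y (d2 x y) /\
       is_dS d1 x y (d11 x y) /\ is_dI d1 x y (d12 x y) /\
       is_dS d2 x y (d21 x y) /\ is_dI d2 x y (d22 x y)) /\
    cont_quadrant G /\ cont_quadrant d1 /\ cont_quadrant d2 /\
    cont_quadrant d11 /\ cont_quadrant d12 /\
    cont_quadrant d21 /\ cont_quadrant d22.

Definition H1 (F f : R -> R -> R) : Prop :=
  C2_quadrant F /\ C2_quadrant f /\
  (forall S I, 0 <= S -> 0 <= I ->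
     F S I = I * f S I /\ 0 <= F S I /\ 0 <= f S I) /\
  (forall I, 0 <= I -> F 0 I = 0) /\
  (forall S, 0 <= S -> F S 0 = 0).

Definition H2 (f : R -> R -> R) : Prop :=
  forall S I, 0 <= S -> 0 <= I ->
    (forall d, is_dS f S I d -> 0 < d) /\
    (forall d, is_dI f S I d -> d <= 0).

Definition H3 (F : R -> R -> R) : Prop :=
  forall S, 0 < S ->
    exists L, 0 < L /\
      filterlim (fun I => F S I / I) (at_right 0) (locally L).

Definition is_solution (Lam mu r k gam1 gam2 v1 v2 : R)
    (F1 F2 : R -> R -> R) (S V1 I1 I2 : R -> R) : Prop :=
  let lam := r + mu in
  let a1 := gam1 + v1 + mu in
  let a2 := gam2 + v2 + mu in
  (forall t, 0 <= t ->
     0 <= S t /\ 0 <= V1 t /\ 0 <= I1 t /\ 0 <= I2 t) /\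
  (forall t, 0 < t ->
     is_derive S t (Lam - F1 (S t) (I1 t) - F2 (S t) (I2 t) - lam * S t) /\
     is_derive V1 t (r * S t - (mu + k * I2 t) * V1 t) /\
     is_derive I1 t (F1 (S t) (I1 t) - a1 * I1 t) /\
     is_derive I2 t (F2 (S t) (I2 t) + k * I2 t * V1 t - a2 * I2 t)) /\
  filterlim S (at_right 0) (locally (S 0)) /\
  filterlim V1 (at_right 0) (locally (V1 0)) /\
  filterlim I1 (at_right 0) (locally (I1 0)) /\
  filterlim I2 (at_right 0) (locally (I2 0)).

Definition dist4 (a b c d a' b' c' d' : R) : R :=
  Rmax (Rmax (Rabs (a - a')) (Rabs (b - b'))) (Rmax (Rabs (c - c')) (Rabs (d - d'))).

Definition GAS (Lam mu r k gam1 gam2 v1 v2 : R) (F1 F2 : R -> R -> R)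
    (e1 e2 e3 e4 : R) : Prop :=
  (Lam - F1 e1 e3 - F2 e1 e4 - (r + mu) * e1 = 0 /\
   r * e1 - (mu + k * e4) * e2 = 0 /\
   F1 e1 e3 - (gam1 + v1 + mu) * e3 = 0 /\
   F2 e1 e4 + k * e4 * e2 - (gam2 + v2 + mu) * e4 = 0) /\
  (forall eps, 0 < eps -> exists delta, 0 < delta /\
     forall S V1 I1 I2,
       is_solution Lam mu r k gam1 gam2 v1 v2 F1 F2 S V1 I1 I2 ->
       dist4 (S 0) (V1 0) (I1 0) (I2 0) e1 e2 e3 e4 < delta ->
       forall t, 0 <= t -> dist4 (S t) (V1 t) (I1 t) (I2 t) e1 e2 e3 e4 < eps) /\
  (forall S V1 I1 I2,
     is_solution Lam mu r k gam1 gam2 v1 v2 F1 F2 S V1 I1 I2 ->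
     filterlim S (Rbar_locally p_infty) (locally e1) /\
     filterlim V1 (Rbar_locally p_infty) (locally e2) /\
     filterlim I1 (Rbar_locally p_infty) (locally e3) /\
     filterlim I2 (Rbar_locally p_infty) (locally e4)).

(* Main.v *)
Require Import Defs.
From Stdlib Require Import Reals Lra.
From Coquelicot Require Import Coquelicot.
Open Scope R_scope.

Definition rc (x : R -> R) (T : R) := filterlim x (at_right T) (locally (x T)).

Lemma rc_eps x T : rc x T -> forall e, 0 < e -> exists d, 0 < d /\
  forall y, T < y < T + d -> Rabs (x y - x T) < e.
Proof.
  intros H e He. apply filterlim_locally with (eps := mkposreal e He) in H.
  destruct H as [d Hd]. exists d. split. apply cond_pos.
  intros y Hy. apply (Hd y). change (Rabs (y - T) < d). rewrite Rabs_right; lra. lra.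
Qed.

Lemma rc_mult u v T : rc u T -> rc v T -> rc (fun t => u t * v t) T.
Proof.
  intros Hu Hv. unfold rc.
  eapply filterlim_comp_2; [exact Hu | exact Hv | apply (filterlim_mult (K:=R_AbsRing))].
Qed.

Lemma rc_plus u v T : rc u T -> rc v T -> rc (fun t => u t + v t) T.
Proof.
  intros Hu Hv. unfold rc.
  eapply filterlim_comp_2; [exact Hu | exact Hv | apply (filterlim_plus (K:=R_AbsRing) (V:=R_NormedModule))].
Qed.

Lemma rc_const c T : rc (fun _ => c) T.
Proof. unfold rc. apply filterlim_const. Qed.

Lemma rc_cont v T : continuous v T -> rc v T.
Proof.
  intros H. unfold rc. eapply filterlim_filter_le_1. 2: exact H.
  apply filter_le_within.
Qed.

Lemma rc_der (x : R -> R) (T d : R) : is_derive x T d -> rc x T.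
Proof. intros H. apply rc_cont. apply (ex_derive_continuous (K:=R_AbsRing) (V:=R_NormedModule)). exists d. exact H. Qed.

Lemma der_cont (x : R -> R) (t d : R) : is_derive x t d -> continuity_pt x t.
Proof.
  intros H. apply continuity_pt_filterlim. apply (ex_derive_continuous (K:=R_AbsRing) (V:=R_NormedModule)). exists d; exact H.
Qed.

Lemma nonincr (g dg : R -> R) a b : a <= b ->
  (forall x, a < x -> x <= b -> is_derive g x (dg x) /\ dg x <= 0) ->
  rc g a -> g b <= g a.
Proof.
  intros Hab Hd Hc.
  destruct (Req_dec a b) as [->|Hne]. lra.
  destruct (Rle_or_lt (g b) (g a)) as [H|H]. exact H. exfalso.
  destruct (rc_eps g a Hc ((g b - g a)/2)) as [d [Hd0 Hd1]]. lra.
  set (x := a + Rmin d (b - a) / 2).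
  assert (Hm1 : Rmin d (b - a) <= d) by apply Rmin_l.
  assert (Hm2 : Rmin d (b - a) <= b - a) by apply Rmin_r.
  assert (Hm0 : 0 < Rmin d (b - a)) by (apply Rmin_glb_lt; lra).
  assert (Hx : a < x < a + d) by (unfold x; lra).
  assert (Hxb : x < b) by (unfold x; lra).
  specialize (Hd1 x Hx).
  destruct (MVT_gen g x b dg) as [c [Hc1 Hc2]].
  - intros y Hy. rewrite Rmin_left in Hy by lra. rewrite Rmax_right in Hy by lra.
    apply Hd; lra.
  - intros y Hy. rewrite Rmin_left in Hy by lra. rewrite Rmax_right in Hy by lra.
    apply der_cont with (dg y). apply Hd; lra.
  - rewrite Rmin_left in Hc1 by lra. rewrite Rmax_right in Hc1 by lra.
    assert (dg c <= 0) by (apply Hd; lra).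
    assert (dg c * (b - x) <= 0).
    { apply Rmult_le_0_r; lra. }
    apply Rabs_def2 in Hd1. lra.
Qed.


Lemma is_derive_eq (f : R -> R) (x l l' : R) : is_derive f x l -> l = l' -> is_derive f x l'.
Proof. intros H ->; exact H. Qed.

Lemma cmp_up (x dx : R -> R) (T a b : R) : 0 < b ->
  (forall t, T < t -> is_derive x t (dx t) /\ dx t <= a - b * x t) -> rc x T ->
  forall t, T <= t -> x t <= a/b + (x T - a/b) * exp (-(b*(t-T))).
Proof.
  intros Hb Hd Hc t Ht.
  set (g := fun s => (x s - a/b) * exp (b*(s-T))).
  assert (Hg : g t <= g T).
  { apply nonincr with (dg := fun s => dx s * exp (b*(s-T)) + (x s - a/b) * (b * exp (b*(s-T)))).
    - exact Ht.
    - intros s Hs _. destruct (Hd s Hs) as [Hd1 Hd2]. split.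
      + unfold g.
        assert (He : is_derive (fun s => exp (b*(s-T))) s (b * exp (b*(s-T)))).
        { auto_derive. auto. unfold Rminus; ring. }
        assert (Hm : is_derive (fun s => x s - a/b) s (dx s - 0)).
        { apply (is_derive_minus x (fun _ => a/b)). exact Hd1. apply (is_derive_const (K:=R_AbsRing) (V:=R_NormedModule)). }
        pose proof (is_derive_mult _ _ s _ _ Hm He Rmult_comm) as HH.
        eapply is_derive_eq. exact HH. unfold plus, mult; simpl. ring.
      + assert (0 < exp (b*(s-T))) by apply exp_pos.
        assert (dx s + b * (x s - a/b) <= 0).
        { assert (b * (a/b) = a) by (field; lra). nra. }
        nra.
    - unfold g. apply rc_mult.
      + apply (rc_plus x (fun _ => - (a/b))). exact Hc. apply rc_const.
      + apply rc_cont. apply (ex_derive_continuous (K:=R_AbsRing) (V:=R_NormedModule)).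
        auto_derive. auto. }
  unfold g in Hg. replace (T - T) with 0 in Hg by ring. rewrite Rmult_0_r, exp_0, Rmult_1_r in Hg.
  assert (He : exp (b*(t-T)) * exp (-(b*(t-T))) = 1).
  { rewrite <- exp_plus. replace (b*(t-T) + -(b*(t-T))) with 0 by ring. apply exp_0. }
  assert (0 < exp (-(b*(t-T)))) by apply exp_pos.
  assert ((x t - a/b) * exp (b*(t-T)) * exp (-(b*(t-T))) <= (x T - a/b) * exp (-(b*(t-T)))).
  { apply Rmult_le_compat_r; lra. }
  rewrite Rmult_assoc, He, Rmult_1_r in H0. lra.
Qed.

Lemma cmp_lo (x dx : R -> R) (T a b : R) : 0 < b ->
  (forall t, T < t -> is_derive x t (dx t) /\ a - b * x t <= dx t) -> rc x T ->
  forall t, T <= t -> a/b + (x T - a/b) * exp (-(b*(t-T))) <= x t.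
Proof.
  intros Hb Hd Hc t Ht.
  assert (H := cmp_up (fun s => - x s) (fun s => - dx s) T (-a) b Hb).
  assert (E : -a/b = -(a/b)) by (field; lra).
  rewrite E in H.
  cut (- x t <= - (a/b) + (- x T - - (a/b)) * exp (- (b * (t - T)))). lra.
  apply H; auto.
  - intros s Hs. destruct (Hd s Hs) as [H1 H2]. split.
    apply (is_derive_opp x s (dx s)). exact H1. lra.
  - unfold rc. eapply filterlim_comp. exact Hc. apply (filterlim_opp (K:=R_AbsRing) (V:=R_NormedModule)).
Qed.

Lemma exp_small (C y e : R) : 0 < e -> 0 <= y -> 2 * Rabs C / e < y -> C * exp (- y) < e / 2.
Proof.
  intros He Hy Hy2.
  assert (H1 : 1 + y <= exp y).
  { destruct (Req_dec y 0) as [->|Hn]. rewrite exp_0; lra. left; apply exp_ineq1; auto. }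
  assert (H2 : exp y * exp (-y) = 1). { rewrite <- exp_plus. replace (y + -y) with 0 by ring. apply exp_0. }
  assert (H3 : 0 < exp (-y)) by apply exp_pos.
  assert (H4 : C <= Rabs C) by apply Rle_abs.
  assert (H5 : 0 <= Rabs C) by apply Rabs_pos.
  assert (H6 : 2 * Rabs C < e * y).
  { apply (Rmult_lt_compat_r e) in Hy2; auto. unfold Rdiv in Hy2.
    rewrite Rmult_assoc, Rinv_l, Rmult_1_r in Hy2 by lra. lra. }
  assert (Rabs C * exp (-y) * exp y = Rabs C) by (rewrite Rmult_assoc, (Rmult_comm (exp (-y))), H2; ring).
  assert (C * exp (-y) <= Rabs C * exp (-y)) by (apply Rmult_le_compat_r; lra).
  nra.
Qed.

Lemma ev_up (x dx : R -> R) (a b : R) : 0 < b ->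
  (forall t, 0 < t -> is_derive x t (dx t)) ->
  (forall e, 0 < e -> exists T, forall t, T < t -> dx t <= a + e - b * x t) ->
  forall e, 0 < e -> exists M, forall t, M < t -> x t <= a/b + e.
Proof.
  intros Hb Hd Hev e He.
  destruct (Hev (b*e/2)) as [T HT]. nra.
  set (T' := Rmax T 0 + 1).
  assert (HT1 : T <= Rmax T 0) by apply Rmax_l.
  assert (HT2 : 0 <= Rmax T 0) by apply Rmax_r.
  set (C := x T' - (a + b*e/2)/b).
  exists (T' + 2 * Rabs C / e / b). intros t Ht.
  assert (Hpos : 0 <= 2 * Rabs C / e / b).
  { unfold Rdiv. assert (0 <= Rabs C) by apply Rabs_pos.
    apply Rmult_le_pos. apply Rmult_le_pos. lra. left; apply Rinv_0_lt_compat; lra. left; apply Rinv_0_lt_compat; lra. }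
  assert (H := cmp_up x dx T' (a + b*e/2) b Hb).
  assert (H' : x t <= (a + b*e/2)/b + C * exp (-(b*(t-T')))).
  { apply H.
    - intros s Hs. split. apply Hd. unfold T' in Hs; lra. apply HT. unfold T' in Hs; lra.
    - apply rc_der with (dx T'). apply Hd. unfold T'; lra.
    - lra. }
  assert (Hs : C * exp (-(b*(t-T'))) < e/2).
  { apply exp_small. auto. nra.
    assert (2 * Rabs C / e = (2 * Rabs C / e / b) * b) by (field; lra).
    rewrite H0. apply Rmult_lt_compat_r with (r := b) in Ht; [|auto]. nra. }
  assert ((a + b*e/2)/b = a/b + e/2) by (field; lra). lra.
Qed.

Lemma ev_lo (x dx : R -> R) (a b : R) : 0 < b ->
  (forall t, 0 < t -> is_derive x t (dx t)) ->
  (forall e, 0 < e -> exists T, forall t, T < t -> a - e - b * x t <= dx t) ->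
  forall e, 0 < e -> exists M, forall t, M < t -> a/b - e <= x t.
Proof.
  intros Hb Hd Hev e He.
  destruct (ev_up (fun s => - x s) (fun s => - dx s) (-a) b Hb) with (e := e) as [M HM]; auto.
  - intros t Ht. apply (is_derive_opp x t (dx t)). auto.
  - intros e' He'. destruct (Hev e' He') as [T HT]. exists T. intros t Ht. specialize (HT t Ht). lra.
  - exists M. intros t Ht. specialize (HM t Ht). assert (-a/b = -(a/b)) by (field; lra). lra.
Qed.

Lemma bnd_up (x dx : R -> R) (T a b : R) : 0 < b ->
  (forall t, T < t -> is_derive x t (dx t) /\ dx t <= a - b * x t) -> rc x T ->
  forall t, T <= t -> x t <= Rmax (x T) (a/b).
Proof.
  intros Hb Hd Hc t Ht. pose proof (cmp_up x dx T a b Hb Hd Hc t Ht) as H.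
  assert (H0 : 0 < exp (-(b*(t-T)))) by apply exp_pos.
  assert (H1 : exp (-(b*(t-T))) <= 1).
  { rewrite <- exp_0. destruct (Req_dec (b*(t-T)) 0) as [E|E]. rewrite E, Ropp_0; lra.
    left. apply exp_increasing. nra. }
  assert (x T <= Rmax (x T) (a/b)) by apply Rmax_l.
  assert (a/b <= Rmax (x T) (a/b)) by apply Rmax_r.
  destruct (Rle_or_lt (a/b) (x T)); nra.
Qed.

Lemma bnd_lo (x dx : R -> R) (T a b : R) : 0 < b ->
  (forall t, T < t -> is_derive x t (dx t) /\ a - b * x t <= dx t) -> rc x T ->
  forall t, T <= t -> Rmin (x T) (a/b) <= x t.
Proof.
  intros Hb Hd Hc t Ht. pose proof (cmp_lo x dx T a b Hb Hd Hc t Ht) as H.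
  assert (H0 : 0 < exp (-(b*(t-T)))) by apply exp_pos.
  assert (H1 : exp (-(b*(t-T))) <= 1).
  { rewrite <- exp_0. destruct (Req_dec (b*(t-T)) 0) as [E|E]. rewrite E, Ropp_0; lra.
    left. apply exp_increasing. nra. }
  assert (Rmin (x T) (a/b) <= x T) by apply Rmin_l.
  assert (Rmin (x T) (a/b) <= a/b) by apply Rmin_r.
  destruct (Rle_or_lt (a/b) (x T)); nra.
Qed.


Lemma cq_eps G x y : cont_quadrant G -> 0 <= x -> 0 <= y ->
  forall e, 0 < e -> exists d, 0 < d /\ forall x' y', 0 <= x' -> 0 <= y' ->
   Rabs (x' - x) < d -> Rabs (y' - y) < d -> Rabs (G x' y' - G x y) < e.
Proof.
  intros HG Hx Hy e He. specialize (HG x y Hx Hy).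
  apply filterlim_locally with (eps := mkposreal e He) in HG.
  destruct HG as [d Hd]. exists d. split. apply cond_pos.
  intros x' y' H1 H2 H3 H4. apply (Hd (x', y')).
  split; assumption. split; assumption.
Qed.

Lemma rc_S G x y : cont_quadrant G -> 0 <= x -> 0 <= y -> rc (fun z => G z y) x.
Proof.
  intros HG Hx Hy. unfold rc. apply filterlim_locally. intros e.
  destruct (cq_eps G x y HG Hx Hy e (cond_pos e)) as [d [Hd0 Hd]].
  exists (mkposreal d Hd0). intros z Hz Hz2. simpl in *. apply Hd; try lra.
  exact Hz. rewrite Rminus_diag, Rabs_R0; lra.
Qed.

Lemma rc_I G x y : cont_quadrant G -> 0 <= x -> 0 <= y -> rc (fun z => G x z) y.
Proof.
  intros HG Hx Hy. unfold rc. apply filterlim_locally. intros e.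
  destruct (cq_eps G x y HG Hx Hy e (cond_pos e)) as [d [Hd0 Hd]].
  exists (mkposreal d Hd0). intros z Hz Hz2. simpl in *. apply Hd; try lra.
  rewrite Rminus_diag, Rabs_R0; lra. exact Hz.
Qed.

Lemma dS_derive G x y d : is_dS G x y d -> 0 < x -> is_derive (fun z => G z y) x d.
Proof.
  intros H Hx. apply is_derive_Reals. intros e He.
  apply filterlim_locally with (eps := mkposreal e He) in H.
  destruct H as [del Hdel].
  assert (Hm : 0 < Rmin del x) by (apply Rmin_glb_lt; [apply cond_pos| lra]).
  exists (mkposreal _ Hm). intros h Hh Hh2. simpl in Hh2.
  assert (Rmin del x <= del) by apply Rmin_l. assert (Rmin del x <= x) by apply Rmin_r.
  apply (Hdel h). change (Rabs (h - 0) < del). rewrite Rminus_0_r; lra.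
  split. exact Hh. apply Rabs_def2 in Hh2. lra.
Qed.

Lemma dI_derive G x y d : is_dI G x y d -> 0 < y -> is_derive (fun z => G x z) y d.
Proof.
  intros H Hx. apply is_derive_Reals. intros e He.
  apply filterlim_locally with (eps := mkposreal e He) in H.
  destruct H as [del Hdel].
  assert (Hm : 0 < Rmin del y) by (apply Rmin_glb_lt; [apply cond_pos| lra]).
  exists (mkposreal _ Hm). intros h Hh Hh2. simpl in Hh2.
  assert (Rmin del y <= del) by apply Rmin_l. assert (Rmin del y <= y) by apply Rmin_r.
  apply (Hdel h). change (Rabs (h - 0) < del). rewrite Rminus_0_r; lra.
  split. exact Hh. apply Rabs_def2 in Hh2. lra.
Qed.

Lemma f_mono F f : H1 F f -> H2 f ->
  forall S S' I, 0 <= S -> S <= S' -> 0 <= I -> f S I <= f S' 0.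
Proof.
  intros [_ [[d1 [d2 [d11 [d12 [d21 [d22 [Hd [Hc _]]]]]]]] _]] Hf2 S S' I HS HSS HI.
  apply Rle_trans with (f S 0).
  - apply (nonincr (fun z => f S z) (fun z => d2 S z) 0 I HI).
    + intros z Hz _. destruct (Hd S z HS (Rlt_le _ _ Hz)) as [_ [Hz2 _]]. split.
      apply dI_derive; auto. apply (proj2 (Hf2 S z HS (Rlt_le _ _ Hz))). exact Hz2.
    + apply rc_I; auto; lra.
  - cut (- f S' 0 <= - f S 0). lra.
    apply (nonincr (fun z => - f z 0) (fun z => - d1 z 0) S S' HSS).
    + intros z Hz _. assert (0 <= z) by lra. destruct (Hd z 0 H (Rle_refl 0)) as [Hz1 _]. split.
      apply (is_derive_opp (fun z => f z 0) z (d1 z 0)). apply dS_derive; auto. lra.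
      assert (0 < d1 z 0) by (apply (proj1 (Hf2 z 0 H (Rle_refl 0))); exact Hz1). lra.
    + unfold rc. eapply filterlim_comp. apply rc_S; auto; lra.
      apply (filterlim_opp (K:=R_AbsRing) (V:=R_NormedModule)).
Qed.

Lemma f_sigma F f s sig : H1 F f -> 0 <= s -> is_dI F s 0 sig -> f s 0 <= sig.
Proof.
  intros [_ [[d1 [d2 [d11 [d12 [d21 [d22 [Hd [Hc _]]]]]]]] [HFf _]]] Hs Hsig.
  destruct (Rle_or_lt (f s 0) sig) as [H|H]. exact H. exfalso.
  set (e := (f s 0 - sig)/2).
  assert (He : 0 < e) by (unfold e; lra).
  apply filterlim_locally with (eps := mkposreal e He) in Hsig.
  destruct Hsig as [d1' Hd1].
  destruct (cq_eps f s 0 Hc Hs (Rle_refl 0) e He) as [d2' [Hd2'0 Hd2]].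
  set (h := Rmin d1' d2' / 2).
  assert (Hm : 0 < Rmin d1' d2') by (apply Rmin_glb_lt; [apply cond_pos| lra]).
  assert (Rmin d1' d2' <= d1') by apply Rmin_l. assert (Rmin d1' d2' <= d2') by apply Rmin_r.
  assert (Hh : 0 < h) by (unfold h; lra).
  assert (A := Hd1 h). simpl in A.
  assert (B := Hd2 s h Hs (Rlt_le _ _ Hh)).
  rewrite Rminus_diag, Rabs_R0 in B. rewrite Rminus_0_r, Rabs_right in B by lra.
  specialize (B Hd2'0 ltac:(unfold h; lra)).
  assert (C : ball 0 d1' h) by (change (Rabs (h - 0) < d1'); rewrite Rminus_0_r, Rabs_right; unfold h; lra).
  assert (D : h <> 0 /\ 0 <= 0 + h) by (split; [apply Rgt_not_eq; exact Hh | lra]).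
  specialize (A C D).
  change (Rabs ((F s (0 + h) - F s 0) / h - sig) < e) in A.
  rewrite Rplus_0_l in A.
  destruct (HFf s h Hs (Rlt_le _ _ Hh)) as [E1 _].
  destruct (HFf s 0 Hs (Rle_refl 0)) as [E2 _].
  rewrite E1, E2 in A. replace ((h * f s h - 0 * f s 0) / h) with (f s h) in A by (field; lra).
  apply Rabs_def2 in A. apply Rabs_def2 in B. unfold e in *. lra.
Qed.

Lemma f_cont F f s : H1 F f -> 0 <= s -> forall m, 0 < m ->
  exists eta, 0 < eta /\ f (s + eta) 0 < f s 0 + m.
Proof.
  intros [_ [[d1 [d2 [d11 [d12 [d21 [d22 [Hd [Hc _]]]]]]]] _]] Hs m Hm.
  destruct (cq_eps f s 0 Hc Hs (Rle_refl 0) m Hm) as [d [Hd0 Hd']].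
  exists (d/2). split. lra.
  assert (A := Hd' (s + d/2) 0 ltac:(lra) (Rle_refl 0)).
  replace (s + d/2 - s) with (d/2) in A by ring. rewrite Rminus_diag, Rabs_R0 in A.
  rewrite Rabs_right in A by lra. specialize (A ltac:(lra) Hd0).
  apply Rabs_def2 in A. lra.
Qed.


Definition ev (P : R -> Prop) := exists M, forall t, M < t -> P t.

Lemma ev_and P Q : ev P -> ev Q -> ev (fun t => P t /\ Q t).
Proof.
  intros [M1 H1] [M2 H2]. exists (Rmax M1 M2). intros t Ht.
  assert (M1 <= Rmax M1 M2) by apply Rmax_l. assert (M2 <= Rmax M1 M2) by apply Rmax_r.
  split; [apply H1|apply H2]; lra.
Qed.

Lemma ev_pos : ev (fun t => 0 < t).
Proof. exists 0. auto. Qed.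

Lemma ev_mono (P Q : R -> Prop) : ev P -> (forall t, P t -> Q t) -> ev Q.
Proof. intros [M H] HPQ. exists M. auto. Qed.

Lemma ev_lim x L : (forall e, 0 < e -> ev (fun t => x t <= L + e)) ->
  (forall e, 0 < e -> ev (fun t => L - e <= x t)) ->
  filterlim x (Rbar_locally p_infty) (locally L).
Proof.
  intros Hu Hl. apply filterlim_locally. intros e.
  assert (He : 0 < e/2) by (generalize (cond_pos e); lra).
  destruct (ev_and _ _ (Hu _ He) (Hl _ He)) as [M HM].
  exists M. intros t Ht. destruct (HM t Ht). change (Rabs (x t - L) < e).
  apply Rabs_def1; generalize (cond_pos e); lra.
Qed.


Lemma attract (Lam mu r k gam1 gam2 v1 v2 : R) (F1 f1 F2 f2 : R -> R -> R)
  (S V I1 I2 : R -> R) (eta c Phi1 Phi2 : R) :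
  0 < Lam -> 0 < mu -> 0 < r -> 0 < k -> 0 < eta -> 0 < c ->
  (forall s i, 0 <= s -> 0 <= i -> F1 s i = i * f1 s i /\ 0 <= f1 s i) ->
  (forall s i, 0 <= s -> 0 <= i -> F2 s i = i * f2 s i /\ 0 <= f2 s i) ->
  (forall s i, 0 <= s -> s <= Lam/(r+mu) + eta -> 0 <= i -> f1 s i <= Phi1) ->
  (forall s i, 0 <= s -> s <= Lam/(r+mu) + eta -> 0 <= i -> f2 s i <= Phi2) ->
  Phi1 <= gam1 + v1 + mu - c ->
  Phi2 + k * (r * (Lam/(r+mu)) / mu + (r/mu + 1) * eta) <= gam2 + v2 + mu - c ->
  is_solution Lam mu r k gam1 gam2 v1 v2 F1 F2 S V I1 I2 ->
  filterlim S (Rbar_locally p_infty) (locally (Lam/(r+mu))) /\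
  filterlim V (Rbar_locally p_infty) (locally (r * (Lam/(r+mu)) / mu)) /\
  filterlim I1 (Rbar_locally p_infty) (locally 0) /\
  filterlim I2 (Rbar_locally p_infty) (locally 0).
Proof.
  intros HL Hmu Hr Hk Heta Hc HF1 HF2 Hm1 Hm2 K1 K2 Hs.
  unfold is_solution in Hs; cbv zeta in Hs. destruct Hs as [Hnn [Hder _]].
  set (S0 := Lam/(r+mu)) in *. set (V0 := r * S0 / mu) in *.
  assert (Hl : 0 < r + mu) by lra.
  assert (HS0 : 0 < S0) by (unfold S0; apply Rdiv_lt_0_compat; lra).
  assert (HV0 : 0 < V0) by (unfold V0; apply Rdiv_lt_0_compat; nra).
  assert (P1 : 0 <= Phi1).
  { apply Rle_trans with (f1 S0 0). apply (HF1 S0 0); lra. apply Hm1; lra. }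
  assert (P2 : 0 <= Phi2).
  { apply Rle_trans with (f2 S0 0). apply (HF2 S0 0); lra. apply Hm2; lra. }
  set (dS := fun t => Lam - F1 (S t) (I1 t) - F2 (S t) (I2 t) - (r + mu) * S t).
  set (dV := fun t => r * S t - (mu + k * I2 t) * V t).
  set (dI1 := fun t => F1 (S t) (I1 t) - (gam1 + v1 + mu) * I1 t).
  set (dI2 := fun t => F2 (S t) (I2 t) + k * I2 t * V t - (gam2 + v2 + mu) * I2 t).
  assert (DS : forall t, 0 < t -> is_derive S t (dS t)) by (intros t Ht; apply (Hder t Ht)).
  assert (DV : forall t, 0 < t -> is_derive V t (dV t)) by (intros t Ht; apply (Hder t Ht)).
  assert (DI1 : forall t, 0 < t -> is_derive I1 t (dI1 t)) by (intros t Ht; apply (Hder t Ht)).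
  assert (DI2 : forall t, 0 < t -> is_derive I2 t (dI2 t)) by (intros t Ht; apply (Hder t Ht)).
  assert (NN : forall t, 0 < t -> 0 <= S t /\ 0 <= V t /\ 0 <= I1 t /\ 0 <= I2 t)
    by (intros t Ht; apply Hnn; lra).
  assert (FB1 : forall t, 0 < t -> F1 (S t) (I1 t) = I1 t * f1 (S t) (I1 t) /\ 0 <= f1 (S t) (I1 t)).
  { intros t Ht. destruct (NN t Ht) as [? [? [? ?]]]. apply HF1; auto. }
  assert (FB2 : forall t, 0 < t -> F2 (S t) (I2 t) = I2 t * f2 (S t) (I2 t) /\ 0 <= f2 (S t) (I2 t)).
  { intros t Ht. destruct (NN t Ht) as [? [? [? ?]]]. apply HF2; auto. }
  assert (FP1 : forall t, 0 < t -> 0 <= F1 (S t) (I1 t)).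
  { intros t Ht. destruct (FB1 t Ht) as [-> ?]. destruct (NN t Ht) as [? [? [? ?]]]. nra. }
  assert (FP2 : forall t, 0 < t -> 0 <= F2 (S t) (I2 t)).
  { intros t Ht. destruct (FB2 t Ht) as [-> ?]. destruct (NN t Ht) as [? [? [? ?]]]. nra. }
  assert (FU1 : forall t, 0 < t -> S t <= S0 + eta -> F1 (S t) (I1 t) <= I1 t * Phi1).
  { intros t Ht Hst. destruct (FB1 t Ht) as [-> ?]. destruct (NN t Ht) as [? [? [? ?]]].
    apply Rmult_le_compat_l. auto. apply Hm1; auto. }
  assert (FU2 : forall t, 0 < t -> S t <= S0 + eta -> F2 (S t) (I2 t) <= I2 t * Phi2).
  { intros t Ht Hst. destruct (FB2 t Ht) as [-> ?]. destruct (NN t Ht) as [? [? [? ?]]].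
    apply Rmult_le_compat_l. auto. apply Hm2; auto. }
  assert (UBS : forall e, 0 < e -> ev (fun t => S t <= S0 + e)).
  { intros e He. apply (ev_up S dS Lam (r+mu) Hl DS); auto.
    intros e' He'. exists 0. intros t Ht. unfold dS.
    generalize (FP1 t Ht) (FP2 t Ht). lra. }
  assert (UBV : forall e, 0 < e -> ev (fun t => V t <= V0 + e)).
  { intros e He. apply (ev_up V dV (r * S0) mu Hmu DV); auto.
    intros e' He'.
    apply (ev_mono _ _ (ev_and _ _ ev_pos (UBS (e'/r) ltac:(apply Rdiv_lt_0_compat; lra)))).
    intros t [Ht Hst]. unfold dV. destruct (NN t Ht) as [? [? [? ?]]].
    assert (0 <= k * I2 t * V t) by (apply Rmult_le_pos; [apply Rmult_le_pos|]; lra).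
    assert (r * S t <= r * S0 + e').
    { apply Rmult_le_compat_l with (r := r) in Hst; [|lra].
      replace (r * (S0 + e'/r)) with (r * S0 + e') in Hst by (field; lra). exact Hst. }
    nra. }
  assert (UBI1 : forall e, 0 < e -> ev (fun t => I1 t <= 0 + e)).
  { intros e He. replace 0 with (0 / c) by (field; lra).
    apply (ev_up I1 dI1 0 c Hc DI1); auto.
    intros e' He'. apply (ev_mono _ _ (ev_and _ _ ev_pos (UBS eta Heta))).
    intros t [Ht Hst]. unfold dI1. destruct (NN t Ht) as [? [? [? ?]]].
    generalize (FU1 t Ht Hst). intros.
    assert (I1 t * Phi1 <= I1 t * (gam1 + v1 + mu - c)) by (apply Rmult_le_compat_l; auto).
    nra. }
  assert (UBI2 : forall e, 0 < e -> ev (fun t => I2 t <= 0 + e)).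
  { intros e He. replace 0 with (0 / c) by (field; lra).
    apply (ev_up I2 dI2 0 c Hc DI2); auto.
    intros e' He'. assert (Hq : 0 < (r/mu + 1) * eta).
    { apply Rmult_lt_0_compat; [|lra]. assert (0 < r/mu) by (apply Rdiv_lt_0_compat; lra). lra. }
    apply (ev_mono _ _ (ev_and _ _ ev_pos (ev_and _ _ (UBS eta Heta) (UBV _ Hq)))).
    intros t [Ht [Hst Hvt]]. unfold dI2. destruct (NN t Ht) as [? [? [? ?]]].
    generalize (FU2 t Ht Hst). intros.
    assert (I2 t * (Phi2 + k * V t) <= I2 t * (gam2 + v2 + mu - c)).
    { apply Rmult_le_compat_l; auto.
      assert (k * V t <= k * (V0 + (r/mu + 1) * eta)) by (apply Rmult_le_compat_l; lra).
      unfold V0 in *. lra. }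
    nra. }
  assert (LBS : forall e, 0 < e -> ev (fun t => S0 - e <= S t)).
  { intros e He. apply (ev_lo S dS Lam (r+mu) Hl DS); auto.
    intros e' He'. set (q := e' / (Phi1 + Phi2 + 1)).
    assert (Hq : 0 < q) by (unfold q; apply Rdiv_lt_0_compat; lra).
    apply (ev_mono _ _ (ev_and _ _ ev_pos (ev_and _ _ (UBS eta Heta) (ev_and _ _ (UBI1 q Hq) (UBI2 q Hq))))).
    intros t [Ht [Hst [Hi1 Hi2]]]. unfold dS.
    generalize (FU1 t Ht Hst) (FU2 t Ht Hst). intros.
    destruct (NN t Ht) as [? [? [? ?]]].
    assert (I1 t * Phi1 <= q * Phi1) by (apply Rmult_le_compat_r; lra).
    assert (I2 t * Phi2 <= q * Phi2) by (apply Rmult_le_compat_r; lra).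
    assert (q * (Phi1 + Phi2) <= e').
    { assert (q * (Phi1 + Phi2 + 1) = e') by (unfold q; field; lra). nra. }
    nra. }
  assert (LBV : forall e, 0 < e -> ev (fun t => V0 - e <= V t)).
  { intros e He. apply (ev_lo V dV (r * S0) mu Hmu DV); auto.
    intros e' He'. set (q := e' / (2 * k * (V0 + 1))).
    assert (Hq : 0 < q) by (unfold q; apply Rdiv_lt_0_compat; nra).
    assert (Hq2 : 0 < e' / (2 * r)) by (apply Rdiv_lt_0_compat; nra).
    apply (ev_mono _ _ (ev_and _ _ ev_pos (ev_and _ _ (LBS _ Hq2) (ev_and _ _ (UBV 1 Rlt_0_1) (UBI2 q Hq))))).
    intros t [Ht [Hst [Hv Hi2]]]. unfold dV.
    destruct (NN t Ht) as [? [? [? ?]]].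
    assert (r * (S0 - e' / (2 * r)) <= r * S t) by (apply Rmult_le_compat_l; lra).
    replace (r * (S0 - e' / (2 * r))) with (r * S0 - e'/2) in H3 by (field; lra).
    assert (k * I2 t * V t <= k * q * (V0 + 1)).
    { rewrite Rmult_assoc, Rmult_assoc. apply Rmult_le_compat_l. lra.
      apply Rmult_le_compat; lra. }
    assert (k * q * (V0 + 1) = e' / 2) by (unfold q; field; lra).
    nra. }
  split; [|split; [|split]].
  - apply ev_lim. exact UBS. exact LBS.
  - apply ev_lim. exact UBV. exact LBV.
  - apply ev_lim. exact UBI1. intros e He. exists 0. intros t Ht. destruct (NN t Ht) as [? [? [? ?]]]. lra.
  - apply ev_lim. exact UBI2. intros e He. exists 0. intros t Ht. destruct (NN t Ht) as [? [? [? ?]]]. lra.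
Qed.


Lemma dist4_lt a b c d a' b' c' d' e :
  Rabs (a - a') < e -> Rabs (b - b') < e -> Rabs (c - c') < e -> Rabs (d - d') < e ->
  dist4 a b c d a' b' c' d' < e.
Proof. intros. unfold dist4. repeat apply Rmax_lub_lt; auto. Qed.

Lemma dist4_inv a b c d a' b' c' d' e : dist4 a b c d a' b' c' d' < e ->
  Rabs (a - a') < e /\ Rabs (b - b') < e /\ Rabs (c - c') < e /\ Rabs (d - d') < e.
Proof.
  unfold dist4. intros H.
  assert (H1 := Rmax_l (Rmax (Rabs (a - a')) (Rabs (b - b'))) (Rmax (Rabs (c - c')) (Rabs (d - d')))).
  assert (H2 := Rmax_r (Rmax (Rabs (a - a')) (Rabs (b - b'))) (Rmax (Rabs (c - c')) (Rabs (d - d')))).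
  assert (H3 := Rmax_l (Rabs (a - a')) (Rabs (b - b'))).
  assert (H4 := Rmax_r (Rabs (a - a')) (Rabs (b - b'))).
  assert (H5 := Rmax_l (Rabs (c - c')) (Rabs (d - d'))).
  assert (H6 := Rmax_r (Rabs (c - c')) (Rabs (d - d'))).
  lra.
Qed.

Lemma stab (Lam mu r k gam1 gam2 v1 v2 : R) (F1 f1 F2 f2 : R -> R -> R)
  (eta c Phi1 Phi2 : R) :
  0 < Lam -> 0 < mu -> 0 < r -> 0 < k -> 0 < eta -> 0 < c ->
  (forall s i, 0 <= s -> 0 <= i -> F1 s i = i * f1 s i /\ 0 <= f1 s i) ->
  (forall s i, 0 <= s -> 0 <= i -> F2 s i = i * f2 s i /\ 0 <= f2 s i) ->
  (forall s i, 0 <= s -> s <= Lam/(r+mu) + eta -> 0 <= i -> f1 s i <= Phi1) ->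
  (forall s i, 0 <= s -> s <= Lam/(r+mu) + eta -> 0 <= i -> f2 s i <= Phi2) ->
  Phi1 <= gam1 + v1 + mu - c ->
  Phi2 + k * (r * (Lam/(r+mu)) / mu + (r/mu + 1) * eta) <= gam2 + v2 + mu - c ->
  forall eps, 0 < eps -> exists delta, 0 < delta /\
     forall S V I1 I2,
       is_solution Lam mu r k gam1 gam2 v1 v2 F1 F2 S V I1 I2 ->
       dist4 (S 0) (V 0) (I1 0) (I2 0) (Lam/(r+mu)) (r * (Lam/(r+mu)) / mu) 0 0 < delta ->
       forall t, 0 <= t -> dist4 (S t) (V t) (I1 t) (I2 t) (Lam/(r+mu)) (r * (Lam/(r+mu)) / mu) 0 0 < eps.
Proof.
  intros HL Hmu Hr Hk Heta Hc HF1 HF2 Hm1 Hm2 K1 K2 eps Heps.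
  set (S0 := Lam/(r+mu)) in *. set (V0 := r * S0 / mu) in *.
  assert (Hl : 0 < r + mu) by lra.
  assert (HS0 : 0 < S0) by (unfold S0; apply Rdiv_lt_0_compat; lra).
  assert (HV0 : 0 < V0) by (unfold V0; apply Rdiv_lt_0_compat; nra).
  assert (P1 : 0 <= Phi1).
  { apply Rle_trans with (f1 S0 0). apply (HF1 S0 0); lra. apply Hm1; lra. }
  assert (P2 : 0 <= Phi2).
  { apply Rle_trans with (f2 S0 0). apply (HF2 S0 0); lra. apply Hm2; lra. }
  set (Vb := V0 + (r/mu + 1) * eta) in *.
  set (A := r/mu). set (B := (Phi1 + Phi2)/(r+mu)). set (C := (r*(B+1) + k*Vb)/mu).
  assert (HA : 0 < A) by (unfold A; apply Rdiv_lt_0_compat; lra).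
  assert (HB : 0 <= B) by (unfold B; apply Rmult_le_pos; [lra| left; apply Rinv_0_lt_compat; lra]).
  assert (HVb : 0 < Vb) by (unfold Vb; fold A; nra).
  assert (HC : 0 <= C) by (unfold C; apply Rmult_le_pos; [nra| left; apply Rinv_0_lt_compat; lra]).
  set (K := 2 + A + B + C).
  set (e' := Rmin eps eta / 2).
  assert (He'1 : Rmin eps eta <= eps) by apply Rmin_l.
  assert (He'2 : Rmin eps eta <= eta) by apply Rmin_r.
  assert (He'0 : 0 < Rmin eps eta) by (apply Rmin_glb_lt; lra).
  set (d := e' / K).
  assert (HK : 2 <= K) by (unfold K; lra).
  assert (HdK : d * K = e') by (unfold d; field; lra).
  assert (Hd : 0 < d) by (unfold d, e'; apply Rdiv_lt_0_compat; lra).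
  exists d. split. exact Hd.
  intros S V I1 I2 Hs H0 t Ht.
  apply dist4_inv in H0. destruct H0 as [D1 [D2 [D3 D4]]].
  rewrite Rminus_0_r in D3, D4.
  apply Rabs_def2 in D1. apply Rabs_def2 in D2. apply Rabs_def2 in D3. apply Rabs_def2 in D4.
  unfold is_solution in Hs; cbv zeta in Hs. destruct Hs as [Hnn [Hder [RS [RV [RI1 RI2]]]]].
  set (dS := fun t => Lam - F1 (S t) (I1 t) - F2 (S t) (I2 t) - (r + mu) * S t).
  set (dV := fun t => r * S t - (mu + k * I2 t) * V t).
  set (dI1 := fun t => F1 (S t) (I1 t) - (gam1 + v1 + mu) * I1 t).
  set (dI2 := fun t => F2 (S t) (I2 t) + k * I2 t * V t - (gam2 + v2 + mu) * I2 t).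
  assert (DS : forall t, 0 < t -> is_derive S t (dS t)) by (intros t' Ht'; apply (Hder t' Ht')).
  assert (DV : forall t, 0 < t -> is_derive V t (dV t)) by (intros t' Ht'; apply (Hder t' Ht')).
  assert (DI1 : forall t, 0 < t -> is_derive I1 t (dI1 t)) by (intros t' Ht'; apply (Hder t' Ht')).
  assert (DI2 : forall t, 0 < t -> is_derive I2 t (dI2 t)) by (intros t' Ht'; apply (Hder t' Ht')).
  assert (NN : forall t, 0 < t -> 0 <= S t /\ 0 <= V t /\ 0 <= I1 t /\ 0 <= I2 t)
    by (intros t' Ht'; apply Hnn; lra).
  assert (FB1 : forall t, 0 < t -> F1 (S t) (I1 t) = I1 t * f1 (S t) (I1 t) /\ 0 <= f1 (S t) (I1 t)).
  { intros t' Ht'. destruct (NN t' Ht') as [? [? [? ?]]]. apply HF1; auto. }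
  assert (FB2 : forall t, 0 < t -> F2 (S t) (I2 t) = I2 t * f2 (S t) (I2 t) /\ 0 <= f2 (S t) (I2 t)).
  { intros t' Ht'. destruct (NN t' Ht') as [? [? [? ?]]]. apply HF2; auto. }
  assert (FP1 : forall t, 0 < t -> 0 <= F1 (S t) (I1 t)).
  { intros t' Ht'. destruct (FB1 t' Ht') as [-> ?]. destruct (NN t' Ht') as [? [? [? ?]]]. nra. }
  assert (FP2 : forall t, 0 < t -> 0 <= F2 (S t) (I2 t)).
  { intros t' Ht'. destruct (FB2 t' Ht') as [-> ?]. destruct (NN t' Ht') as [? [? [? ?]]]. nra. }
  assert (FU1 : forall t, 0 < t -> S t <= S0 + eta -> F1 (S t) (I1 t) <= I1 t * Phi1).
  { intros t' Ht' Hst. destruct (FB1 t' Ht') as [-> ?]. destruct (NN t' Ht') as [? [? [? ?]]].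
    apply Rmult_le_compat_l. auto. apply Hm1; auto. }
  assert (FU2 : forall t, 0 < t -> S t <= S0 + eta -> F2 (S t) (I2 t) <= I2 t * Phi2).
  { intros t' Ht' Hst. destruct (FB2 t' Ht') as [-> ?]. destruct (NN t' Ht') as [? [? [? ?]]].
    apply Rmult_le_compat_l. auto. apply Hm2; auto. }
  assert (s1 : forall t, 0 <= t -> S t <= S0 + d).
  { intros t' Ht'. assert (H := bnd_up S dS 0 Lam (r+mu) Hl).
    assert (S t' <= Rmax (S 0) (Lam / (r+mu))).
    { apply H; auto. intros u Hu. split. auto. unfold dS. generalize (FP1 u Hu) (FP2 u Hu). lra. }
    assert (Rmax (S 0) S0 <= S0 + d) by (apply Rmax_lub; lra). fold S0 in H0. lra. }
  assert (s1' : forall t, 0 <= t -> S t <= S0 + eta).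
  { intros t' Ht'. specialize (s1 t' Ht'). unfold e' in HdK. nra. }
  assert (s2 : forall t, 0 <= t -> V t <= V0 + (A + 1) * d).
  { intros t' Ht'. assert (H := bnd_up V dV 0 (r * (S0 + d)) mu Hmu).
    assert (V t' <= Rmax (V 0) (r * (S0 + d) / mu)).
    { apply H; auto. intros u Hu. split. auto. unfold dV. destruct (NN u Hu) as [? [? [? ?]]].
      assert (0 <= k * I2 u * V u) by (apply Rmult_le_pos; [apply Rmult_le_pos|]; lra).
      assert (r * S u <= r * (S0 + d)) by (apply Rmult_le_compat_l; [lra| apply s1; lra]).
      nra. }
    assert (E : r * (S0 + d) / mu = V0 + A * d) by (unfold V0, A; field; lra).
    rewrite E in H0.
    assert (Rmax (V 0) (V0 + A * d) <= V0 + (A + 1) * d) by (apply Rmax_lub; nra). lra. }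
  assert (s2' : forall t, 0 <= t -> V t <= Vb).
  { intros t' Ht'. specialize (s2 t' Ht'). unfold Vb. fold A.
    assert ((A + 1) * d <= (A + 1) * eta).
    { apply Rmult_le_compat_l. lra. unfold e' in HdK. nra. } lra. }
  assert (s3 : forall t, 0 <= t -> I1 t < d).
  { intros t' Ht'. assert (H := bnd_up I1 dI1 0 0 c Hc).
    assert (I1 t' <= Rmax (I1 0) (0 / c)).
    { apply H; auto. intros u Hu. split. auto. unfold dI1. destruct (NN u Hu) as [? [? [? ?]]].
      generalize (FU1 u Hu (s1' u ltac:(lra))). intros.
      assert (I1 u * Phi1 <= I1 u * (gam1 + v1 + mu - c)) by (apply Rmult_le_compat_l; auto).
      nra. }
    replace (0 / c) with 0 in H0 by (field; lra).
    assert (Rmax (I1 0) 0 < d) by (apply Rmax_lub_lt; lra). lra. }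
  assert (s4 : forall t, 0 <= t -> I2 t < d).
  { intros t' Ht'. assert (H := bnd_up I2 dI2 0 0 c Hc).
    assert (I2 t' <= Rmax (I2 0) (0 / c)).
    { apply H; auto. intros u Hu. split. auto. unfold dI2. destruct (NN u Hu) as [? [? [? ?]]].
      generalize (FU2 u Hu (s1' u ltac:(lra))). intros.
      assert (I2 u * (Phi2 + k * V u) <= I2 u * (gam2 + v2 + mu - c)).
      { apply Rmult_le_compat_l; auto.
        assert (k * V u <= k * Vb) by (apply Rmult_le_compat_l; [lra| apply s2'; lra]).
        lra. }
      nra. }
    replace (0 / c) with 0 in H0 by (field; lra).
    assert (Rmax (I2 0) 0 < d) by (apply Rmax_lub_lt; lra). lra. }
  assert (s5 : forall t, 0 <= t -> S0 - (1 + B) * d <= S t).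
  { intros t' Ht'. assert (H := bnd_lo S dS 0 (Lam - d * (Phi1 + Phi2)) (r+mu) Hl).
    assert (Rmin (S 0) ((Lam - d * (Phi1 + Phi2)) / (r+mu)) <= S t').
    { apply H; auto. intros u Hu. split. auto. unfold dS.
      generalize (FU1 u Hu (s1' u ltac:(lra))) (FU2 u Hu (s1' u ltac:(lra))). intros.
      destruct (NN u Hu) as [? [? [? ?]]].
      assert (I1 u * Phi1 <= d * Phi1) by (apply Rmult_le_compat_r; [lra| left; apply s3; lra]).
      assert (I2 u * Phi2 <= d * Phi2) by (apply Rmult_le_compat_r; [lra| left; apply s4; lra]).
      nra. }
    assert (E : (Lam - d * (Phi1 + Phi2)) / (r+mu) = S0 - d * B) by (unfold S0, B; field; lra).
    rewrite E in H0.
    assert (S0 - (1 + B) * d <= Rmin (S 0) (S0 - d * B)) by (apply Rmin_glb; nra). lra. }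
  assert (s6 : forall t, 0 <= t -> V0 - (1 + C) * d <= V t).
  { intros t' Ht'. assert (H := bnd_lo V dV 0 (r * (S0 - (1 + B) * d) - k * d * Vb) mu Hmu).
    assert (Rmin (V 0) ((r * (S0 - (1 + B) * d) - k * d * Vb) / mu) <= V t').
    { apply H; auto. intros u Hu. split. auto. unfold dV.
      destruct (NN u Hu) as [? [? [? ?]]].
      assert (r * (S0 - (1 + B) * d) <= r * S u) by (apply Rmult_le_compat_l; [lra| apply s5; lra]).
      assert (k * I2 u * V u <= k * d * Vb).
      { rewrite Rmult_assoc, Rmult_assoc. apply Rmult_le_compat_l. lra.
        apply Rmult_le_compat; try lra. left; apply s4; lra. apply s2'; lra. }
      nra. }
    assert (E : (r * (S0 - (1 + B) * d) - k * d * Vb) / mu = V0 - d * C) by (unfold V0, C; field; lra).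
    rewrite E in H0.
    assert (V0 - (1 + C) * d <= Rmin (V 0) (V0 - d * C)) by (apply Rmin_glb; nra). lra. }
  assert (Heps' : e' < eps) by (unfold e'; lra).
  assert (Q1 : (1 + B) * d <= d * K) by (unfold K; nra).
  assert (Q2 : (A + 1) * d <= d * K) by (unfold K; nra).
  assert (Q3 : (1 + C) * d <= d * K) by (unfold K; nra).
  assert (Q4 : d <= d * K) by (unfold K; nra).
  apply dist4_lt.
  - specialize (s1 t Ht). specialize (s5 t Ht). apply Rabs_def1; lra.
  - specialize (s2 t Ht). specialize (s6 t Ht). apply Rabs_def1; lra.
  - specialize (s3 t Ht). destruct (Hnn t Ht) as [? [? [? ?]]]. rewrite Rminus_0_r. apply Rabs_def1; lra.
  - specialize (s4 t Ht). destruct (Hnn t Ht) as [? [? [? ?]]]. rewrite Rminus_0_r. apply Rabs_def1; lra.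
Qed.


Theorem mainTheorem12
  (F1 f1 F2 f2 : R -> R -> R)
  (Lam mu r k gam1 gam2 v1 v2 sigma1 sigma2 : R) :
  0 < Lam -> 0 < mu -> 0 < r -> 0 < k -> 0 < gam1 -> 0 < gam2 ->
  0 <= v1 -> 0 <= v2 ->
  H1 F1 f1 -> H2 f1 -> H3 F1 ->
  H1 F2 f2 -> H2 f2 -> H3 F2 ->
  is_dI F1 (Lam / (r + mu)) 0 sigma1 ->
  is_dI F2 (Lam / (r + mu)) 0 sigma2 ->
  Rmax (sigma1 / (gam1 + v1 + mu))
       (sigma2 / (gam2 + v2 + mu)
        + k * r * Lam / ((gam2 + v2 + mu) * mu * (r + mu))) < 1 ->
  GAS Lam mu r k gam1 gam2 v1 v2 F1 F2
      (Lam / (r + mu)) (r * Lam / (mu * (r + mu))) 0 0.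
Proof.
  intros HL Hmu Hr Hk Hg1 Hg2 Hv1 Hv2 HH1 HH2 _ HH1' HH2' _ Hs1 Hs2 HR.
  assert (Hl : 0 < r + mu) by lra.
  set (S0 := Lam / (r + mu)) in *.
  assert (HS0 : 0 < S0) by (unfold S0; apply Rdiv_lt_0_compat; lra).
  set (V0 := r * S0 / mu).
  assert (EV : r * Lam / (mu * (r + mu)) = V0) by (unfold V0, S0; field; lra).
  rewrite EV.
  set (a1 := gam1 + v1 + mu) in *. set (a2 := gam2 + v2 + mu) in *.
  assert (Ha1 : 0 < a1) by (unfold a1; lra). assert (Ha2 : 0 < a2) by (unfold a2; lra).
  assert (R1 : sigma1 < a1).
  { assert (H := Rmax_l (sigma1 / a1) (sigma2 / a2 + k * r * Lam / (a2 * mu * (r + mu)))).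
    assert (sigma1 / a1 * a1 = sigma1) by (field; lra). nra. }
  assert (R2 : sigma2 + k * V0 < a2).
  { assert (H := Rmax_r (sigma1 / a1) (sigma2 / a2 + k * r * Lam / (a2 * mu * (r + mu)))).
    assert ((sigma2 / a2 + k * r * Lam / (a2 * mu * (r + mu))) * a2 = sigma2 + k * V0)
      by (unfold V0, S0; field; lra). nra. }
  assert (HF1 : forall s i, 0 <= s -> 0 <= i -> F1 s i = i * f1 s i /\ 0 <= f1 s i).
  { intros s i Hs Hi. destruct HH1 as [_ [_ [H _]]]. destruct (H s i Hs Hi) as [? [? ?]]. auto. }
  assert (HF2 : forall s i, 0 <= s -> 0 <= i -> F2 s i = i * f2 s i /\ 0 <= f2 s i).
  { intros s i Hs Hi. destruct HH1' as [_ [_ [H _]]]. destruct (H s i Hs Hi) as [? [? ?]]. auto. }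
  assert (Sg1 : f1 S0 0 <= sigma1) by (apply (f_sigma F1 f1 S0 sigma1); auto; lra).
  assert (Sg2 : f2 S0 0 <= sigma2) by (apply (f_sigma F2 f2 S0 sigma2); auto; lra).
  set (m := Rmin (a1 - sigma1) (a2 - sigma2 - k * V0)).
  assert (Hm : 0 < m) by (unfold m; apply Rmin_glb_lt; lra).
  assert (Hm1 : m <= a1 - sigma1) by apply Rmin_l.
  assert (Hm2 : m <= a2 - sigma2 - k * V0) by apply Rmin_r.
  destruct (f_cont F1 f1 S0 HH1 ltac:(lra) (m/4) ltac:(lra)) as [eta1 [He1 Hf1]].
  destruct (f_cont F2 f2 S0 HH1' ltac:(lra) (m/4) ltac:(lra)) as [eta2 [He2 Hf2]].
  assert (HA : 0 < r / mu) by (apply Rdiv_lt_0_compat; lra).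
  set (eta3 := m / (4 * k * (r / mu + 1))).
  assert (He3 : 0 < eta3) by (unfold eta3; apply Rdiv_lt_0_compat; nra).
  set (eta := Rmin eta1 (Rmin eta2 eta3)).
  assert (Heta : 0 < eta) by (unfold eta; repeat apply Rmin_glb_lt; lra).
  assert (E1 : eta <= eta1) by apply Rmin_l.
  assert (E2 : eta <= eta2) by (apply Rle_trans with (Rmin eta2 eta3); [apply Rmin_r | apply Rmin_l]).
  assert (E3 : eta <= eta3) by (apply Rle_trans with (Rmin eta2 eta3); [apply Rmin_r | apply Rmin_r]).
  set (Phi1 := f1 (S0 + eta) 0). set (Phi2 := f2 (S0 + eta) 0).
  assert (M1 : forall s i, 0 <= s -> s <= S0 + eta -> 0 <= i -> f1 s i <= Phi1).
  { intros s i Hs Hss Hi. apply (f_mono F1 f1 HH1 HH2); auto. }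
  assert (M2 : forall s i, 0 <= s -> s <= S0 + eta -> 0 <= i -> f2 s i <= Phi2).
  { intros s i Hs Hss Hi. apply (f_mono F2 f2 HH1' HH2'); auto. }
  set (c := m / 2).
  assert (Hc : 0 < c) by (unfold c; lra).
  assert (K1 : Phi1 <= a1 - c).
  { assert (Phi1 <= f1 (S0 + eta1) 0) by (apply (f_mono F1 f1 HH1 HH2); lra). unfold c. lra. }
  assert (K2 : Phi2 + k * (r * S0 / mu + (r / mu + 1) * eta) <= a2 - c).
  { assert (Phi2 <= f2 (S0 + eta2) 0) by (apply (f_mono F2 f2 HH1' HH2'); lra).
    assert (k * ((r / mu + 1) * eta) <= k * ((r / mu + 1) * eta3)).
    { apply Rmult_le_compat_l. lra. apply Rmult_le_compat_l; lra. }
    assert (k * ((r / mu + 1) * eta3) = m / 4) by (unfold eta3; field; nra).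
    fold V0. unfold c. nra. }
  split; [|split].
  - destruct HH1 as [_ [_ [_ [_ Z1]]]]. destruct HH1' as [_ [_ [_ [_ Z2]]]].
    rewrite (Z1 S0), (Z2 S0) by lra.
    unfold V0, S0. repeat split; field; lra.
  - intros eps Heps.
    destruct (stab Lam mu r k gam1 gam2 v1 v2 F1 f1 F2 f2 eta c Phi1 Phi2
               HL Hmu Hr Hk Heta Hc HF1 HF2 M1 M2 K1 K2 eps Heps) as [d [Hd Hd']].
    exists d. split. exact Hd. exact Hd'.
  - intros S V I1 I2 Hs.
    exact (attract Lam mu r k gam1 gam2 v1 v2 F1 f1 F2 f2 S V I1 I2 eta c Phi1 Phi2
             HL Hmu Hr Hk Heta Hc HF1 HF2 M1 M2 K1 K2 Hs).
Qed.
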